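(* Let $K\subseteq\mathbb{R}^n$ be a closed convex set of dimension at least $2$, and let $O\in\partial K$. Then $\mathrm{CR}(O)\geq \mathrm{LCD}(O)$.
   Context: For $r>0$, $S_r(O)\subseteq\mathbb{R}^n$ denotes the Euclidean sphere of radius $r$ centered at $O$. The connectivity radius $\mathrm{CR}(O)$ is the supremum of all $\epsilon$ such that for every $0<r<\epsilon$ the intersection $S_r(O)\cap K$ is connected. A point $P\in\partial K\setminus\{O\}$ is called $O$-critical if $\langle O-P, X-P\rangle\geq 0$ for all $X\in K$ (equivalently, the affine hyperplane through $P$ orthogonal to the segment $OP$ is a supporting hyperplane of $K$). The least critical distance $\mathrm{LCD}(O)$ is the infimum of $|OP|$ over all $O$-critical points $P\in\partial K$. *)

(* Defs.v *)
From HB Require Import structures.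
From mathcomp Require Import all_boot all_order all_algebra.
From mathcomp Require Import all_classical all_reals all_analysis.
Set Implicit Arguments. Unset Strict Implicit. Unset Printing Implicit Defensive.
Import Order.TTheory GRing.Theory Num.Theory.
Import numFieldNormedType.Exports.
Local Open Scope classical_set_scope.
Local Open Scope ring_scope.

(* Points of R^n are row vectors 'rV[R]_n; the topology on 'rV[R]_n is the
   product topology (= Euclidean topology). Distances are Euclidean. *)

Section Defs.
Variables (R : realType) (n : nat).
Implicit Types (x y O P X : 'rV[R]_n) (K : set 'rV[R]_n).

Definition dotp x y : R := \sum_(i < n) x 0 i * y 0 i.
Definition enorm x : R := Num.sqrt (dotp x x).

Definition esphere O (r : R) : set 'rV[R]_n := [set x | enorm (x - O) = r].

Definition is_convex K : Prop :=
  forall x y t, K x -> K y -> 0 <= t <= 1 -> K (t *: x + (1 - t) *: y).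

Definition bnd K : set 'rV[R]_n := closure K `\` interior K.

Definition affdim_ge2 K : Prop :=
  exists (m : nat) (p0 : 'rV[R]_n) (p : 'I_m -> 'rV[R]_n),
    K p0 /\ (forall i, K (p i)) /\ (2 <= \rank (\matrix_(i < m) (p i - p0)))%N.

Definition CR K O : \bar R :=
  ereal_sup [set e%:E | e in [set e : R | forall r : R, 0 < r -> r < e ->
                          connected (esphere O r `&` K)]].

Definition critical K O P : Prop :=
  bnd K P /\ P != O /\ forall X, K X -> 0 <= dotp (O - P) (X - P).

Definition LCD K O : \bar R :=
  ereal_inf [set (enorm (P - O))%:E | P in critical K O].

End Defs.

(* Main.v *)
Require Import Defs.
From HB Require Import structures.
From mathcomp Require Import all_boot all_order all_algebra.
From mathcomp Require Import all_classical all_reals all_analysis.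
From mathcomp Require Import ring lra.
Import numFieldNormedType.Exports.
Local Open Scope classical_set_scope.
Local Open Scope ring_scope.
Set Implicit Arguments. Unset Strict Implicit. Unset Printing Implicit Defensive.
Import Order.TTheory GRing.Theory Num.Theory.

Ltac vec := apply/rowP => i; rewrite !mxE; ring.



Section Basics.
Variables (R : realType) (n : nat).
Implicit Types (x y z : 'rV[R]_n) (a b t : R).
Local Notation dot := (@dotp R n).
Local Notation nm := (@enorm R n).

Lemma dotpC x y : dot x y = dot y x.
Proof. by apply: eq_bigr => i _; rewrite mulrC. Qed.

Lemma dotpDl x y z : dot (x + y) z = dot x z + dot y z.
Proof. by rewrite /dotp -big_split; apply: eq_bigr => i _; rewrite mxE mulrDl. Qed.

Lemma dotpDr x y z : dot z (x + y) = dot z x + dot z y.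
Proof. by rewrite dotpC dotpDl !(dotpC z). Qed.

Lemma dotpZl a x y : dot (a *: x) y = a * dot x y.
Proof. by rewrite /dotp mulr_sumr; apply: eq_bigr => i _; rewrite mxE mulrA. Qed.

Lemma dotpZr a x y : dot x (a *: y) = a * dot x y.
Proof. by rewrite dotpC dotpZl dotpC. Qed.

Lemma dotpNl x y : dot (- x) y = - dot x y.
Proof. by rewrite -scaleN1r dotpZl mulN1r. Qed.

Lemma dotpNr x y : dot x (- y) = - dot x y.
Proof. by rewrite dotpC dotpNl dotpC. Qed.

Lemma dotpBl x y z : dot (x - y) z = dot x z - dot y z.
Proof. by rewrite dotpDl dotpNl. Qed.

Lemma dotpBr x y z : dot z (x - y) = dot z x - dot z y.
Proof. by rewrite dotpDr dotpNr. Qed.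

Lemma dotp0l x : dot 0 x = 0.
Proof. by rewrite /dotp big1 // => i _; rewrite mxE mul0r. Qed.

Lemma dotp0r x : dot x 0 = 0.
Proof. by rewrite dotpC dotp0l. Qed.

Lemma dotpp_ge0 x : 0 <= dot x x.
Proof. by rewrite /dotp sumr_ge0 // => i _; rewrite -expr2 sqr_ge0. Qed.

Lemma dotpp_eq0 x : dot x x = 0 -> x = 0.
Proof.
move=> /eqP; rewrite /dotp psumr_eq0; last by move=> i _; rewrite -expr2 sqr_ge0.
move=> /allP H; apply/rowP => i; rewrite mxE.
by have := H i (mem_index_enum _); rewrite /= -expr2 sqrf_eq0 => /eqP.
Qed.

Lemma enorm_ge0 x : 0 <= nm x.
Proof. exact: sqrtr_ge0. Qed.

Lemma enorm_sqr x : nm x ^+ 2 = dot x x.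
Proof. by rewrite sqr_sqrtr // dotpp_ge0. Qed.

Lemma enorm0 : nm 0 = 0.
Proof. by rewrite /enorm dotp0l sqrtr0. Qed.

Lemma enorm_eq0 x : nm x = 0 -> x = 0.
Proof. by move=> h; apply: dotpp_eq0; rewrite -enorm_sqr h expr0n. Qed.

Lemma enormZ a x : nm (a *: x) = `|a| * nm x.
Proof.
by rewrite /enorm dotpZl dotpZr mulrA -expr2 sqrtrM ?sqr_ge0 // sqrtr_sqr.
Qed.

Lemma enormN x : nm (- x) = nm x.
Proof. by rewrite -scaleN1r enormZ normrN1 mul1r. Qed.

Lemma enormB x y : nm (x - y) = nm (y - x).
Proof. by rewrite -enormN opprB. Qed.

Lemma CS x y : dot x y ^+ 2 <= dot x x * dot y y.
Proof.
have [y0|yn0] := eqVneq (dot y y) 0.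
  by have -> := dotpp_eq0 y0; rewrite dotp0r dotp0l mulr0 expr0n.
have := dotpp_ge0 (dot y y *: x - dot x y *: y).
rewrite !(dotpBl, dotpBr, dotpZl, dotpZr) (dotpC y x) => H.
have yp : 0 < dot y y by rewrite lt_def yn0 dotpp_ge0.
have : 0 <= dot y y * (dot x x * dot y y - dot x y ^+ 2).
  by move: H; congr (_ <= _); rewrite expr2; ring.
by rewrite pmulr_rge0 // subr_ge0.
Qed.

Lemma CSn x y : dot x y <= nm x * nm y.
Proof.
rewrite /enorm -sqrtrM ?dotpp_ge0 //.
have [h|h] := lerP (dot x y) 0.
  by apply: le_trans h (sqrtr_ge0 _).
by rewrite -(ger0_norm (ltW h)) -sqrtr_sqr ler_sqrt ?CS // mulr_ge0 ?dotpp_ge0.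
Qed.

Lemma CSabs x y : `|dot x y| <= nm x * nm y.
Proof.
have [h|h] := lerP 0 (dot x y); first by rewrite ger0_norm // CSn.
by rewrite ltr0_norm // -dotpNl -(enormN x) CSn.
Qed.

Lemma enormD x y : nm (x + y) <= nm x + nm y.
Proof.
rewrite -(ler_pXn2r (_ : (0 < 2)%N)) ?nnegrE ?addr_ge0 ?enorm_ge0 //.
rewrite enorm_sqr dotpDl !dotpDr sqrrD !enorm_sqr (dotpC y x).
have := CSn x y; lra.
Qed.

Lemma enormB_ge x y : nm x - nm y <= nm (x - y).
Proof. by have := enormD (x - y) y; rewrite subrK; lra. Qed.


Lemma coord_le x j : `|x 0 j| <= nm x.
Proof.
rewrite -sqrtr_sqr ler_sqrt ?dotpp_ge0 // /dotp (bigD1 j) //= -expr2 lerDl.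
by apply: sumr_ge0 => i _; rewrite -expr2 sqr_ge0.
Qed.

Lemma mxnorm_le x : `|x| <= nm x.
Proof.
have -> : `|x| = mx_norm x by [].
rewrite mx_normrE.
apply/bigmax_leP; split; first exact: enorm_ge0.
by move=> [i j] _ /=; rewrite ord1; exact: coord_le.
Qed.

Lemma enorm_le_mx x : nm x <= (Num.sqrt n%:R + 1) * `|x|.
Proof.
apply: (@le_trans _ _ (Num.sqrt n%:R * `|x|)); last first.
  by rewrite ler_wpM2r // ?lerDl // normr_ge0.
have h : dot x x <= n%:R * `|x| ^+ 2.
  have -> : n%:R * `|x| ^+ 2 = \sum_(i < n) `|x| ^+ 2.
    by rewrite sumr_const card_ord mulr_natl.
  apply: ler_sum => i _; rewrite -expr2 -real_normK ?num_real //.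
  have hi : `|x 0 i| <= `|x|.
    have -> : `|x| = mx_norm x by [].
    rewrite mx_normrE.
    exact: (le_bigmax _ (fun ij : 'I_1 * 'I_n => `|x ij.1 ij.2|) (0, i)).
  by rewrite !expr2 ler_pM.
by rewrite /enorm -[in X in _ <= _ * X](normr_id x) -(sqrtr_sqr `|x|) -sqrtrM // ler_sqrt // mulr_ge0 // sqr_ge0.
Qed.

Let C : R := Num.sqrt n%:R + 1.
Lemma C_gt0 : 0 < C.
Proof. by rewrite /C ltr_wpDl. Qed.

Lemma cont_of_enorm (V : normedModType R) (f : 'rV[R]_n -> V) :
  (forall x e, 0 < e -> exists2 d, 0 < d &
     forall y, nm (y - x) < d -> `|f y - f x| < e) -> continuous f.
Proof.
move=> H x; apply/(@cvgrPdist_lt _ _ _ (nbhs x) (nbhs_filter x)) => e e0.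
have [d d0 Hd] := H x e e0.
apply/(@nbhs_normP _ 'rV[R]_n); exists (d / C); first by rewrite /= divr_gt0 // C_gt0.
move=> y /= hy; rewrite distrC; apply: Hd.
apply: (le_lt_trans (enorm_le_mx _)).
by rewrite -ltr_pdivlMl ?C_gt0 // mulrC distrC.
Qed.

Lemma cont_of_enorm2 (f : 'rV[R]_n -> 'rV[R]_n) :
  (forall x e, 0 < e -> exists2 d, 0 < d &
     forall y, nm (y - x) < d -> nm (f y - f x) < e) -> continuous f.
Proof.
move=> H; apply: cont_of_enorm => x e e0.
have [d d0 Hd] := H x e e0; exists d => // y /Hd.
exact: le_lt_trans (mxnorm_le _).
Qed.

Lemma cont_from_R (f : R -> 'rV[R]_n) :
  (forall (s : R) (e : R), 0 < e -> exists2 d : R, 0 < d &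
     forall u : R, `|u - s| < d -> nm (f u - f s) < e) -> continuous f.
Proof.
move=> H s; apply/(@cvgrPdist_lt _ _ _ (nbhs s) (nbhs_filter s)) => e e0.
have [d d0 Hd] := H s e e0.
apply/(@nbhs_normP _ R^o); exists d => // u /= hu.
rewrite distrC; apply: le_lt_trans (mxnorm_le _) _; apply: Hd.
by rewrite distrC.
Qed.

Lemma enorm_continuous : continuous nm.
Proof.
apply: cont_of_enorm => x e e0; exists e => // y hy.
apply: le_lt_trans hy; rewrite ler_norml; apply/andP; split.
  by rewrite lerNl opprB; have := enormB_ge x y; rewrite enormB.
exact: enormB_ge.
Qed.

End Basics.



Lemma bounded_of (R : realType) n (A : set 'rV[R]_n) (B : R) :
 (forall x, A x -> `|x| <= B) -> bounded_set A.
Proof.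
move=> H. exists B; split; first by rewrite num_real.
move=> M hM x Ax /=. exact: (le_trans (H x Ax) (ltW hM)).
Qed.


Section Proj.
Variables (R : realType) (n : nat) (K : set 'rV[R]_n).
Hypotheses (Kc : closed K) (Kv : is_convex K).
Variable (k0 : 'rV[R]_n).
Hypothesis (Kk0 : K k0).
Implicit Types (x y z p : 'rV[R]_n).
Local Notation dot := (@dotp R n).
Local Notation nm := (@enorm R n).

Lemma segK x y (t : R) : K x -> K y -> 0 <= t <= 1 -> K (x + t *: (y - x)).
Proof.
move=> Kx Ky t01; have := Kv Ky Kx t01.
by congr K; rewrite scalerBr scalerBl scale1r; vec.
Qed.

Lemma sqr_le x y : nm x <= nm y -> dot x x <= dot y y.
Proof.
by move=> h; rewrite -!enorm_sqr ler_pXn2r ?nnegrE ?enorm_ge0.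
Qed.

Lemma small_t (c D : R) : 0 <= D ->
  (forall t : R, 0 < t <= 1 -> 2 * c <= t * D) -> c <= 0.
Proof.
move=> D0 H; rewrite leNgt; apply/negP => c0.
set t := Num.min 1 (c / (D + 1)).
have t0 : 0 < t by rewrite lt_min ltr01 divr_gt0 // ltr_wpDl.
have t1 : t <= 1 by rewrite ge_min lexx.
have := H t; rewrite t0 t1 => /(_ isT).
have tc : t <= c / (D + 1) by rewrite ge_min lexx orbT.
have : t * D <= c / (D + 1) * D by rewrite ler_wpM2r.
have : c / (D + 1) * D < c.
  rewrite mulrAC ltr_pdivrMr ?ltr_wpDl //; nra.
lra.
Qed.

Lemma var_ineq z p : K p -> (forall x, K x -> nm (z - p) <= nm (z - x)) ->
  forall x, K x -> dot (z - p) (x - p) <= 0.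
Proof.
move=> Kp Hp x Kx; apply: (small_t (dotpp_ge0 (x - p))) => t /andP[t0 t1].
have := sqr_le (Hp _ (segK Kp Kx (t:=t) _)).
rewrite ltW // t1 => /(_ isT).
have -> : z - (p + t *: (x - p)) = (z - p) - t *: (x - p) by vec.
move=> h; rewrite !(dotpBl, dotpBr, dotpZl, dotpZr) in h.
have : 0 <= t * (t * dot (x - p) (x - p) - 2 * dot (z - p) (x - p)).
  move: h; rewrite -subr_ge0 => h; apply: le_trans h _; rewrite le_eqVlt; apply/orP; left; apply/eqP.
  rewrite !(dotpBl, dotpBr) (dotpC x z) (dotpC p z) (dotpC p x); ring.
by rewrite pmulr_rge0 // subr_ge0.
Qed.

Lemma cproj_ex z : exists p, K p /\ forall x, K x -> nm (z - p) <= nm (z - x).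
Proof.
set A := K `&` [set x | nm (z - x) <= nm (z - k0)].
have fc : continuous (fun x => nm (z - x)).
  apply: cont_of_enorm => x e e0; exists e => // y hy.
  apply: le_lt_trans hy; rewrite ler_norml; apply/andP; split.
    have := enormB_ge (z - x) (z - y).
    by rewrite (_ : z - x - (z - y) = y - x); [lra|vec].
  have := enormB_ge (z - y) (z - x).
  by rewrite (_ : z - y - (z - x) = - (y - x)) ?enormN; [lra|vec].
have A0 : A !=set0 by exists k0; split => //=.
have Ac : compact A.
  apply: bounded_closed_compact.
    apply: (@bounded_of _ _ _ (nm z + nm (z - k0))) => x [_ /= hx].
    apply: le_trans (mxnorm_le _) _.
    have := enormD z (x - z); rewrite addrC subrK => h.
    by apply: le_trans h _; rewrite lerD2l enormB.
  apply: closedI => //.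
  have := @preimage_closed _ R (fun x => nm (z - x)) [set y | y <= nm (z - k0)]
    (fun x _ => fc x) (@closed_le R _).
  by [].
have [c cA cmin] := EVT_min_rV A0 Ac (@continuous_subspaceT _ _ A _ fc).
move: cA; rewrite inE => -[Kc0 _].
exists c; split => // x Kx.
have [h|h] := lerP (nm (z - x)) (nm (z - k0)).
  by apply: cmin; rewrite inE.
have := cmin k0; rewrite inE => /(_ (conj Kk0 (lexx _))) h2.
exact: le_trans h2 (ltW h).
Qed.

Definition cproj z := xget 0 (fun p => K p /\ forall x, K x -> nm (z - p) <= nm (z - x)).

Lemma cprojP z : K (cproj z) /\ forall x, K x -> nm (z - cproj z) <= nm (z - x).
Proof. exact: (xgetPex 0 (cproj_ex z)). Qed.

Lemma cprojK z : K (cproj z). Proof. by case: (cprojP z). Qed.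

Lemma cproj_var z x : K x -> dot (z - cproj z) (x - cproj z) <= 0.
Proof. by case: (cprojP z) => Kp Hp; exact: var_ineq. Qed.

Lemma cproj_lip z1 z2 : nm (cproj z1 - cproj z2) <= nm (z1 - z2).
Proof.
set p1 := cproj z1; set p2 := cproj z2.
have h1 := cproj_var z1 (cprojK z2).
have h2 := cproj_var z2 (cprojK z1).
rewrite -/p1 -/p2 in h1 h2.
have h : dot (p1 - p2) (p1 - p2) <= dot (z1 - z2) (p1 - p2).
  move: h1 h2; rewrite !(dotpBl, dotpBr) (dotpC p1 p2) (dotpC z1 p2) (dotpC z2 p1).
  rewrite (dotpC p2 z1) (dotpC p1 z2); lra.
have h3 : nm (p1 - p2) * nm (p1 - p2) <= nm (z1 - z2) * nm (p1 - p2).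
  by rewrite -expr2 enorm_sqr; exact: le_trans h (CSn _ _).
have [e0|e0] := eqVneq (nm (p1 - p2)) 0.
  by rewrite e0 enorm_ge0.
have ep : 0 < nm (p1 - p2) by rewrite lt_def e0 enorm_ge0.
by rewrite -(ler_pM2r ep).
Qed.

Lemma cproj_continuous : continuous cproj.
Proof.
apply: cont_of_enorm2 => x e e0; exists e => // y hy.
exact: le_lt_trans (cproj_lip _ _) hy.
Qed.

End Proj.




Section Seg.
Variables (R : realType) (n : nat).
Local Notation dot := (@dotp R n).
Local Notation nm := (@enorm R n).
Implicit Types (u v x y : 'rV[R]_n).

Definition seg u v : set 'rV[R]_n := [set u + t *: (v - u) | t in `[0, 1]].

Lemma seg_connected u v : connected (seg u v).
Proof.
apply: (connected_continuous_connected (@segment_connected R 0 1)).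
apply: continuous_subspaceT; apply: cont_from_R => s e e0.
exists (e / (nm (v - u) + 1)); first by rewrite divr_gt0 // ltr_wpDl // enorm_ge0.
move=> t ht.
have -> : u + t *: (v - u) - (u + s *: (v - u)) = (t - s) *: (v - u) by vec.
rewrite enormZ; rewrite ltr_pdivlMr ?ltr_wpDl ?enorm_ge0 // in ht.
apply: le_lt_trans ht; by rewrite ler_wpM2l ?normr_ge0 // lerDl.
Qed.

Lemma seg_l u v : seg u v u.
Proof. by exists 0; [rewrite /= in_itv /= lexx ler01 | rewrite scale0r addr0]. Qed.

Lemma seg_r u v : seg u v v.
Proof. by exists 1; [rewrite /= in_itv /= lexx ler01 | rewrite scale1r addrC subrK]. Qed.

Lemma seg_sub (K : set 'rV[R]_n) u v : is_convex K -> K u -> K v -> seg u v `<=` K.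
Proof.
move=> Kv Ku Kw _ [t ht <-]; apply: segK => //.
Qed.

Lemma seg_lb (w u v : 'rV[R]_n) (s : R) : nm w <= 1 -> s <= dot w u -> s <= dot w v ->
  forall y, seg u v y -> s <= nm y.
Proof.
move=> w1 hu hv _ [t ht <-]; move: ht; rewrite /= in_itv /= => /andP[t0 t1].
have e : dot w (u + t *: (v - u)) = (1 - t) * dot w u + t * dot w v.
  by rewrite dotpDr dotpZr dotpBr; ring.
have h1 : s <= dot w (u + t *: (v - u)).
  rewrite e; have : (1 - t) * s <= (1 - t) * dot w u by rewrite ler_wpM2l // subr_ge0.
  have : t * s <= t * dot w v by rewrite ler_wpM2l.
  lra.
apply: le_trans h1 _; apply: le_trans (CSn _ _) _.
by rewrite ler_piMl ?enorm_ge0.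
Qed.

Lemma pair_lb u v (k m : R) : 0 <= k -> 0 < m -> m <= nm u -> m <= nm v ->
  (k - 1) * (nm u * nm v) <= dot u v -> forall y, seg u v y -> k * m / 2 <= nm y.
Proof.
move=> k0 m0 mu mv huv.
set al := nm u in mu huv *; set be := nm v in mv huv *.
have al0 : 0 < al by apply: lt_le_trans mu.
have be0 : 0 < be by apply: lt_le_trans mv.
have p0 : 0 < 2 * al * be by rewrite !mulr_gt0.
apply: (@seg_lb ((2 * al * be)^-1 *: (be *: u + al *: v))).
- rewrite enormZ gtr0_norm ?invr_gt0 // -ler_pdivlMl ?invr_gt0 // invrK mulr1.
  apply: le_trans (enormD _ _) _; rewrite !enormZ !gtr0_norm // -/al -/be.
  by rewrite le_eqVlt; apply/orP; left; apply/eqP; ring.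
- rewrite dotpZl dotpDl !dotpZl -enorm_sqr -/al (dotpC v u).
  rewrite [X in _ <= X]mulrC ler_pdivlMr //.
  have h1 : al * ((k - 1) * (al * be)) <= al * dot u v by rewrite ler_wpM2l // ltW.
  have h2 : 0 <= (k * be * al) * (al - m).
    by rewrite mulr_ge0 ?subr_ge0 // !mulr_ge0 // ltW.
  nra.
- rewrite dotpZl dotpDl !dotpZl -[dot v v]enorm_sqr -/be [X in _ <= X]mulrC ler_pdivlMr //.
  have h1 : be * ((k - 1) * (al * be)) <= be * dot u v by rewrite ler_wpM2l // ltW.
  have h2 : 0 <= (k * be * al) * (be - m).
    by rewrite mulr_ge0 ?subr_ge0 // !mulr_ge0 // ltW.
  nra.
Qed.

Lemma dichot (a b x : 'rV[R]_n) (c k : R) : 0 < nm a -> 0 < nm b -> 0 < nm x ->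
  dot a b = c * (nm a * nm b) -> 4 * k <= 1 - c ->
  (k - 1) * (nm x * nm a) <= dot x a \/ (k - 1) * (nm x * nm b) <= dot x b.
Proof.
move=> a0 b0 x0 hc hk.
have [h1|h1] := lerP ((k - 1) * (nm x * nm a)) (dot x a); first by left.
have [h2|h2] := lerP ((k - 1) * (nm x * nm b)) (dot x b); first by right.
exfalso.
set al := nm a in a0 hc h1; set be := nm b in b0 hc h2; set xi := nm x in x0 h1 h2.
set v := be *: a + al *: b.
have hv : dot x v = be * dot x a + al * dot x b by rewrite dotpDr !dotpZr.
have hvv : dot v v = 2 * (al * be) ^+ 2 + 2 * (al * be) * dot a b.
  rewrite /v !(dotpDl, dotpDr, dotpZl, dotpZr) -!enorm_sqr -/al -/be (dotpC b a); ring.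
have cs := CSabs x v.
have p0 : 0 < al * be by rewrite mulr_gt0.
have hcm : -1 <= c.
  have := CSabs a b; rewrite hc normrM (gtr0_norm p0) -/al -/be => h.
  have : `|c| <= 1 by rewrite -(ler_pM2r p0) mul1r.
  by rewrite ler_norml => /andP[].
have hA : 2 * (1 - k) * (al * be) < nm v.
  have hx : be * dot x a < be * ((k - 1) * (xi * al)) by rewrite ltr_pM2l.
  have hy : al * dot x b < al * ((k - 1) * (xi * be)) by rewrite ltr_pM2l.
  have hz : - dot x v <= xi * nm v.
    by apply: le_trans cs; rewrite -normrN ler_norm.
  have : xi * (2 * (1 - k) * (al * be)) < xi * nm v.
    move: hx hy hz; rewrite hv; lra.
  by rewrite ltr_pM2l.
have k1 : k <= 1 / 2 by lra.
have hB : (2 * (1 - k) * (al * be)) ^+ 2 < nm v ^+ 2.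
  rewrite ltr_pXn2r ?nnegrE ?enorm_ge0 //.
  have : 0 <= 1 - k by lra.
  move=> h; rewrite !mulr_ge0 // ltW //.
rewrite enorm_sqr hvv hc -/al -/be in hB.
have : (al * be) ^+ 2 * (4 * (1 - k) ^+ 2) < (al * be) ^+ 2 * (2 + 2 * c).
  by move: hB; congr (_ < _); ring.
rewrite ltr_pM2l ?exprn_gt0 //.
nra.
Qed.

End Seg.

Section Core.
Variables (R : realType) (n : nat) (K : set 'rV[R]_n).
Hypotheses (Kc : closed K) (Kv : is_convex K) (K0 : K 0).
Variable r : R.
Hypothesis r0 : 0 < r.
Local Notation dot := (@dotp R n).
Local Notation nm := (@enorm R n).
Hypothesis Hnc : forall y, K y -> 0 < nm y -> nm y <= r ->
  exists z, K z /\ 0 < dot y (z - y).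
Implicit Types (x y z : 'rV[R]_n).

Definition psi x := cproj K (2 *: x).

Lemma psiK x : K (psi x).
Proof. exact: (cprojK Kc K0). Qed.

Lemma psi_min x : K x -> nm (2 *: x - psi x) <= nm x.
Proof.
move=> Kx; have [_ h] := cprojP Kc K0 (2 *: x).
by have := h x Kx; rewrite (_ : 2 *: x - x = x) //; vec.
Qed.

Lemma psi_seg x (t : R) : K x -> 0 <= t <= 1 -> nm x <= nm (x + t *: (psi x - x)).
Proof.
move=> Kx /andP[t0 t1]; set p := psi x; set y := x + t *: (p - x).
have h := psi_min Kx; rewrite -/p in h.
have e : 2 *: x - y = (1 - t) *: x + t *: (2 *: x - p) by rewrite /y; vec.
have h2 : nm (2 *: x - y) <= (1 - t) * nm x + t * nm (2 *: x - p).
  by rewrite e; apply: le_trans (enormD _ _) _; rewrite !enormZ !ger0_norm // subr_ge0.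
have h3 : nm (2 *: x) = 2 * nm x by rewrite enormZ ger0_norm.
have h4 := enormD y (2 *: x - y).
rewrite (_ : y + (2 *: x - y) = 2 *: x) in h4; last by rewrite addrCA subrr addr0.
have : t * nm (2 *: x - p) <= t * nm x by rewrite ler_wpM2l.
lra.
Qed.

Lemma psi_ge x : K x -> nm x <= nm (psi x).
Proof.
move=> Kx; have := psi_seg Kx (t:=1); rewrite scale1r addrC subrK; apply.
by rewrite ler01 lexx.
Qed.

Lemma psi_gt x : K x -> 0 < nm x -> nm x <= r -> nm x < nm (psi x).
Proof.
move=> Kx x0 xr; have [z [Kz hz]] := Hnc Kx x0 xr.
set p := psi x; have hmin := psi_min Kx; rewrite -/p in hmin.
have hlt : nm (2 *: x - p) < nm x.
  rewrite lt_neqAle hmin andbT; apply/negP => /eqP heq.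
  have e2 : 2 *: x - x = x by vec.
  have hm : forall y, K y -> nm (2 *: x - x) <= nm (2 *: x - y).
    move=> y Ky; rewrite e2 -heq; have [_ h] := cprojP Kc K0 (2 *: x); exact: h.
  have := var_ineq Kv Kx hm Kz; rewrite e2 leNgt hz; by [].
have h4 := enormD p (2 *: x - p).
rewrite (_ : p + (2 *: x - p) = 2 *: x) in h4; last by rewrite addrCA subrr addr0.
rewrite enormZ ger0_norm // in h4.
lra.
Qed.

Lemma psi_cont : continuous psi.
Proof.
apply: cont_of_enorm2 => x e e0; exists (e / 2); first by rewrite divr_gt0.
move=> y hy; apply: le_lt_trans (cproj_lip Kc Kv K0 _ _) _.
rewrite (_ : 2 *: y - 2 *: x = 2 *: (y - x)); last by vec.
by rewrite enormZ ger0_norm // -ltr_pdivlMl // mulrC.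
Qed.

Lemma iterK k x : K x -> K (iter k psi x).
Proof. by case: k => //= k _; exact: psiK. Qed.

Lemma iter_mono k x : K x -> nm x <= nm (iter k psi x).
Proof.
move=> Kx; elim: k => //= k IH; exact: le_trans IH (psi_ge (iterK k Kx)).
Qed.

Lemma iter_cont k : continuous (iter k psi).
Proof.
elim: k => [|k IH] x; first exact: cvg_id.
have := continuous_comp (IH x) (@psi_cont (iter k psi x)); exact.
Qed.

Lemma eta_ex s1 : 0 < s1 -> exists2 eta, 0 < eta &
  forall x, K x -> s1 <= nm x -> nm x <= r -> nm x + eta <= nm (psi x).
Proof.
move=> s0.
set Q := K `&` [set x | s1 <= nm x] `&` [set x | nm x <= r].
case: (pselect (Q !=set0)) => [Q0|Q0]; last first.
  by exists 1 => // x Kx h1 h2; exfalso; apply: Q0; exists x.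
set g := fun x => nm (psi x) - nm x.
have gc : continuous g.
  move=> x; apply: (@continuousB R R^o _ (fun y => nm (psi y)) nm x).
    have := continuous_comp (@psi_cont x) (@enorm_continuous _ _ (psi x)); exact.
  exact: enorm_continuous.
have Qc : compact Q.
  apply: bounded_closed_compact.
    by apply: (@bounded_of _ _ _ r) => x [_ /= hx]; apply: le_trans (mxnorm_le _) hx.
  apply: closedI; first apply: closedI => //.
    have := @preimage_closed _ R nm [set y | s1 <= y]
      (fun x _ => @enorm_continuous _ _ x) (@closed_ge R _).
    by [].
  have := @preimage_closed _ R nm [set y | y <= r]
    (fun x _ => @enorm_continuous _ _ x) (@closed_le R _).
  by [].
have [c cQ cmin] := EVT_min_rV Q0 Qc (@continuous_subspaceT _ _ Q _ gc).
move: cQ; rewrite inE => -[[Kc1 hc1] hc2].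
exists (g c).
  rewrite /g subr_gt0; apply: psi_gt => //; exact: lt_le_trans hc1.
move=> x Kx h1 h2; have := cmin x; rewrite inE => /(_ (conj (conj Kx h1) h2)).
rewrite /g; lra.
Qed.

Lemma iter_bound (s1 eta : R) k x : s1 <= r -> 0 <= eta ->
  (forall x, K x -> s1 <= nm x -> nm x <= r -> nm x + eta <= nm (psi x)) ->
  K x -> s1 <= nm x -> Num.min (s1 + k%:R * eta) r <= nm (iter k psi x).
Proof.
move=> s1r eta0 He Kx hx; elim: k => [|k IH].
  by rewrite mul0r addr0 ge_min hx.
rewrite /= -/(iter k psi x); set y := iter k psi x in IH *.
have Ky : K y := iterK k Kx.
have hy := psi_ge Ky.
rewrite ge_min in IH; rewrite ge_min -natr1 mulrDl mul1r.
case/orP: IH => h.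
  have hk : 0 <= k%:R * eta by rewrite mulr_ge0.
  case: (lerP (nm y) r) => hr.
    have hs : s1 <= nm y by lra.
    have h2 := He y Ky hs hr.
    by apply/orP; left; lra.
  by apply/orP; right; lra.
by apply/orP; right; lra.
Qed.

Fixpoint chain k x : set 'rV[R]_n :=
  if k is k'.+1 then chain k' x `|` seg (iter k' psi x) (iter k'.+1 psi x)
  else [set x].

Lemma chain_prop k x : K x -> [/\ connected (chain k x), chain k x (iter k psi x),
  chain k x x & chain k x `<=` [set y | K y /\ nm x <= nm y]].
Proof.
move=> Kx; elim: k => [|k [c1 c2 c3 c4]] /=.
  split => //; first exact: connected1.
  by move=> y ->.
set y := iter k psi x in c2 *.
have Ky : K y := iterK k Kx.
split.
- apply: connectedU => //; last exact: seg_connected.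
  by exists y; split => //; exact: seg_l.
- by right; exact: seg_r.
- by left.
- move=> z [/c4 //|[t ht <-]]; move: ht; rewrite /= in_itv /= => ht; split.
    have := segK Kv Ky (psiK y) ht. exact.
  exact: le_trans (iter_mono k Kx) (psi_seg Ky ht).
Qed.

Definition Rad y := (r / nm y) *: y.

Lemma Rad_prop y : K y -> r <= nm y -> K (Rad y) /\ nm (Rad y) = r.
Proof.
move=> Ky hy; have y0 : 0 < nm y by apply: lt_le_trans hy.
split.
  have := segK Kv K0 Ky (t := r / nm y); rewrite subr0 add0r; apply.
  apply/andP; split; first by rewrite divr_ge0 // ltW.
  by rewrite ler_pdivrMr // mul1r.
by rewrite /Rad enormZ ger0_norm ?divr_ge0 ?ltW // divfK // gt_eqF.
Qed.

Lemma Rad_cont y : 0 < nm y -> {for y, continuous Rad}.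
Proof.
move=> y0.
apply: (@continuousZ R _ _ (fun z => r / nm z) id y); last exact: cvg_id.
have h1 : {for y, continuous (fun z => (nm z)^-1)}.
  have := @continuousV R _ nm y (lt0r_neq0 y0) (@enorm_continuous _ _ y).
  exact.
have := @continuousM R _ (fun=> r) (fun z => (nm z)^-1) y (@cst_continuous _ _ r y) h1.
exact.
Qed.

Lemma core_connected a b : K a -> K b -> dot a b ^+ 2 < dot a a * dot b b ->
  connected (esphere 0 r `&` K).
Proof.
move=> Ka Kb hab.
have a0 : 0 < nm a.
  rewrite lt_def enorm_ge0 andbT; apply/eqP => /enorm_eq0 a0.
  by move: hab; rewrite a0 !dotp0l expr0n mul0r ltxx.
have b0 : 0 < nm b.
  rewrite lt_def enorm_ge0 andbT; apply/eqP => /enorm_eq0 b0.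
  by move: hab; rewrite b0 !dotp0r expr0n mulr0 ltxx.
set al := nm a in a0; set be := nm b in b0.
have p0 : 0 < al * be by rewrite mulr_gt0.
set c := dot a b / (al * be).
have hc : dot a b = c * (al * be) by rewrite /c divfK // gt_eqF.
have hc1 : c ^+ 2 < 1.
  move: hab; rewrite hc -!enorm_sqr -/al -/be => h.
  have : (al * be) ^+ 2 * c ^+ 2 < (al * be) ^+ 2 * 1.
    by move: h; congr (_ < _); ring.
  by rewrite ltr_pM2l // exprn_gt0.
have cm : -1 < c by nra.
have cp : c < 1 by nra.
set k := Num.min ((1 - c) / 4) (1 + c).
have k0 : 0 < k by rewrite lt_min divr_gt0 ?subr_gt0 //; lra.
have k1 : 4 * k <= 1 - c.
  have : k <= (1 - c) / 4 by rewrite ge_min lexx.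
  lra.
have k2 : k - 1 <= c.
  have : k <= 1 + c by rewrite ge_min lexx orbT.
  lra.
set m0 := Num.min r (Num.min al be).
have m00 : 0 < m0 by rewrite !lt_min r0 a0 b0.
have m0r : m0 <= r by rewrite ge_min lexx.
have m0a : m0 <= al by rewrite !ge_min lexx orbT.
have m0b : m0 <= be by rewrite !ge_min lexx !orbT.
set s1 := k * m0 / 2.
have s10 : 0 < s1 by rewrite divr_gt0 // mulr_gt0.
have s1r : s1 <= r.
  have : k * m0 <= 1 * m0 by rewrite ler_wpM2r ?ltW //; lra.
  rewrite /s1; lra.
have [eta eta0 He] := eta_ex s10.
set N := Num.bound (r / eta).
have hN : r < N%:R * eta.
  by rewrite -ltr_pdivrMr // archi_boundP // divr_ge0 ?ltW.
set F := iter N psi.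
have HF : forall y, K y -> s1 <= nm y -> K (F y) /\ r <= nm (F y).
  move=> y Ky hy; split; first exact: iterK.
  have := iter_bound N s1r (ltW eta0) He Ky hy.
  by rewrite ge_min => /orP[h|//]; apply: le_trans h; lra.
have Hab : forall y, seg a b y -> s1 <= nm y.
  apply: (pair_lb (k:=k) (m:=m0)); [exact: ltW|exact: m00|exact: m0a|exact: m0b|].
  by rewrite -/al -/be hc; apply: ler_wpM2r => //; exact: ltW.
set M := esphere 0 r `&` K.
have Mx : forall x, M x <-> K x /\ nm x = r.
  by move=> x; rewrite /M /esphere /= subr0; split => -[].
pose cx x := if (k - 1) * (nm x * al) <= dot x a then a else b.
have Hcx : forall x, M x -> forall y, seg x (cx x) y -> s1 <= nm y.
  move=> x /Mx [Kx xr]; have x0 : 0 < nm x by rewrite xr.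
  rewrite /cx; case: ifP => h.
    apply: (pair_lb (k:=k) (m:=m0)) => //; [exact: ltW | by rewrite xr].
  have := dichot a0 b0 x0 hc k1; rewrite h => -[//|h2].
  apply: (pair_lb (k:=k) (m:=m0)) => //; [exact: ltW | by rewrite xr].
pose L x := seg x (cx x) `|` seg a b.
have HL : forall x, M x -> L x `<=` [set y | K y /\ s1 <= nm y].
  move=> x Mx0 y [h|h]; split.
  - have [Kx _] := (Mx x).1 Mx0.
    apply: seg_sub h => //; rewrite /cx; case: ifP => _ //.
  - exact: Hcx h.
  - exact: seg_sub h.
  - exact: Hab.
have Lc : forall x, connected (L x).
  move=> x; apply: connectedU; [|exact: seg_connected|exact: seg_connected].
  exists (cx x); split; first exact: seg_r.
  by rewrite /cx; case: ifP => _; [exact: seg_l | exact: seg_r].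
pose S x := Rad @` (chain N x `|` F @` L x).
have SM : forall x, M x -> S x `<=` M.
  move=> x Mx0 _ [y hy <-]; have [Kx xr] := (Mx x).1 Mx0.
  have [Ky ry] : K y /\ r <= nm y.
    case: hy => [h|[z hz <-]].
      by have [_ _ _ c4] := chain_prop N Kx; have [? h2] := c4 _ h; rewrite -xr.
    by have [Kz sz] := HL x Mx0 z hz; exact: HF.
  by apply/Mx; exact: Rad_prop.
have Sc : forall x, M x -> connected (S x).
  move=> x Mx0; have [Kx xr] := (Mx x).1 Mx0.
  have [c1 c2 c3 c4] := chain_prop N Kx.
  apply: connected_continuous_connected.
    apply: connectedU => //.
      exists (F x); split => //; exists x => //; left; exact: seg_l.
    apply: connected_continuous_connected (Lc x) _.
    apply: continuous_subspaceT; exact: iter_cont.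
  apply: continuous_in_subspaceT => y; rewrite inE => hy; apply: Rad_cont.
  case: hy => [h|[z hz <-]].
    by have [_ h2] := c4 _ h; rewrite xr in h2; exact: lt_le_trans r0 h2.
  have [Kz sz] := HL x Mx0 z hz; have [_ h2] := HF z Kz sz.
  exact: lt_le_trans r0 h2.
have Meq : M = \bigcup_(x in M) S x.
  apply/seteqP; split.
    move=> x Mx0; exists x => //; have [Kx xr] := (Mx x).1 Mx0.
    have [_ _ c3 _] := chain_prop N Kx.
    exists x; first by left.
    by rewrite /Rad xr divff ?scale1r // gt_eqF.
  by move=> y [x Mx0 hy]; exact: SM x Mx0 y hy.
rewrite Meq; apply: bigcup_connected => //.
exists (Rad (F a)) => x Mx0; exists (F a) => //; right; exists a => //.
by right; exact: seg_l.
Qed.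

End Core.




Section Wrap.
Variables (R : realType) (n : nat).
Local Notation dot := (@dotp R n).
Local Notation nm := (@enorm R n).
Implicit Types (x y z a b : 'rV[R]_n).

Lemma collinear a b : dot a a * dot b b <= dot a b ^+ 2 -> b != 0 ->
  a = (dot a b / dot b b) *: b.
Proof.
move=> h bn0.
have bb : 0 < dot b b.
  rewrite lt_def dotpp_ge0 andbT; apply/eqP => /dotpp_eq0 b0; by rewrite b0 eqxx in bn0.
set t := dot a b / dot b b.
apply/eqP; rewrite -subr_eq0; apply/eqP/dotpp_eq0/eqP.
rewrite eq_le dotpp_ge0 andbT.
have -> : dot (a - t *: b) (a - t *: b) =
   (dot a a * dot b b - dot a b ^+ 2) / dot b b.
  rewrite !(dotpBl, dotpBr, dotpZl, dotpZr) (dotpC b a).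
  rewrite /t; field; exact: lt0r_neq0.
by rewrite pmulr_lle0 ?invr_gt0 // subr_le0.
Qed.

Lemma transl_cont (O : 'rV[R]_n) : continuous (fun y : 'rV[R]_n => y + O).
Proof.
apply: cont_of_enorm2 => x e e0; exists e => // y.
by rewrite (_ : y + O - (x + O) = y - x) //; vec.
Qed.

Lemma aff_pair (K : set 'rV[R]_n) (O : 'rV[R]_n) : affdim_ge2 K ->
  exists a b, K (a + O) /\ K (b + O) /\ dot a b ^+ 2 < dot a a * dot b b.
Proof.
move=> [m [p0 [p [Kp0 [Kp hr]]]]].
apply: contrapT => Hn.
have H : forall a b, K (a + O) -> K (b + O) -> dot a a * dot b b <= dot a b ^+ 2.
  move=> a b Ka Kb; rewrite leNgt; apply/negP => h; apply: Hn; exists a, b; done.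
have [v Hv] : exists v, forall y, K (y + O) -> y = (dot y v / dot v v) *: v.
  case: (pselect (exists v, K (v + O) /\ v != 0)) => [[v [Kv vn0]]|hn].
    by exists v => y Ky; exact: collinear (H _ _ Ky Kv) vn0.
  exists 0 => y Ky; rewrite scaler0; apply: contrapT => yn0; apply: hn.
  by exists y; split => //; exact/eqP.
pose lam y := dot y v / dot v v.
have eqM : \matrix_(i < m) (p i - p0) =
    (\col_(i < m) (lam (p i - O) - lam (p0 - O))) *m v.
  apply/matrixP => i j; rewrite !mxE big_ord1 !mxE.
  have k1 : K (p i - O + O) by rewrite subrK.
  have k2 : K (p0 - O + O) by rewrite subrK.
  have e1 := Hv (p i - O) k1.
  have e2 := Hv (p0 - O) k2.
  have := congr1 (fun M : 'rV[R]_n => M 0 j) e1.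
  have := congr1 (fun M : 'rV[R]_n => M 0 j) e2.
  rewrite /= !mxE /lam => h2 h1.
  by rewrite mulrBl -h1 -h2; ring.
move: hr; rewrite eqM => hr.
have h1 := leq_trans hr (mxrankM_maxr _ _).
have h2 := rank_leq_row v.
by have := leq_trans h1 h2.
Qed.

End Wrap.

Section Key.
Variables (R : realType) (n : nat).
Local Notation dot := (@dotp R n).
Local Notation nm := (@enorm R n).

Lemma key (K : set 'rV[R]_n) (O : 'rV[R]_n) : closed K -> is_convex K ->
  affdim_ge2 K -> bnd K O ->
  forall r : R, 0 < r -> (r%:E < LCD K O)%E -> connected (esphere O r `&` K).
Proof.
move=> Kc Kv Had [HOc HOi] r r0 hr.
have KO : K O by move: HOc; rewrite -((closure_id K).1 Kc).
pose K0 := [set y : 'rV[R]_n | K (y + O)].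
have K0c : closed K0.
  have := @preimage_closed _ _ (fun y : 'rV[R]_n => y + O) K (fun x _ => @transl_cont R n O x) Kc.
  exact.
have K0v : is_convex K0.
  move=> x y t Kx Ky t01; have := Kv _ _ _ Kx Ky t01; rewrite /K0 /=.
  by congr K; vec.
have K00 : K0 0 by rewrite /K0 /= add0r.
have Hnc : forall y, K0 y -> 0 < nm y -> nm y <= r ->
    exists z, K0 z /\ 0 < dot y (z - y).
  move=> y Ky y0 yr; apply: contrapT => hn.
  have hle : forall z, K0 z -> dot y (z - y) <= 0.
    by move=> z Kz; rewrite leNgt; apply/negP => h; apply: hn; exists z.
  have yy : 0 < dot y y by rewrite -enorm_sqr exprn_gt0.
  have crit : critical K O (y + O).
    split; [split|split].
    - exact: subset_closure.
    - move=> /(@nbhs_normP _ 'rV[R]_n) [e /= e0 he].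
      pose eps := e / (2 * (`|y| + 1)).
      have eps0 : 0 < eps by rewrite divr_gt0 // mulr_gt0 // ltr_wpDl.
      have : K (y + O + eps *: y).
        apply: he; rewrite /= opprD addrA subrr sub0r normrN normrZ gtr0_norm //.
        rewrite /eps mulrAC ltr_pdivrMr ?mulr_gt0 ?ltr_wpDl //.
        have : 0 <= `|y| by [].
        nra.
      rewrite (_ : y + O + eps *: y = (y + eps *: y) + O); last by vec.
      move=> /hle; rewrite (_ : y + eps *: y - y = eps *: y); last by vec.
      by rewrite dotpZr leNgt mulr_gt0.
    - apply/eqP => h; have y00 : y = 0 by move: h; rewrite -{2}(add0r O) => /addIr.
      by move: y0; rewrite y00 enorm0 ltxx.
    - move=> X KX.
      rewrite (_ : O - (y + O) = - y); last by vec.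
      rewrite (_ : X - (y + O) = (X - O) - y); last by vec.
      rewrite dotpNl oppr_ge0; apply: hle; by rewrite /K0 /= subrK.
  have : (LCD K O <= (nm (y + O - O))%:E)%E.
    by apply: ereal_inf_lbound; exists (y + O).
  rewrite addrK => h; have := lt_le_trans hr h; rewrite lte_fin => h2.
  by move: yr; rewrite leNgt h2.
have [a [b [Ka [Kb hab]]]] := aff_pair O Had.
have Cc := core_connected K0c K0v K00 r0 Hnc Ka Kb hab.
have -> : esphere O r `&` K = (fun y => y + O) @` (esphere 0 r `&` K0).
  apply/seteqP; split.
    move=> x [hx Kx]; exists (x - O); last by rewrite subrK.
    by split; rewrite /esphere /K0 /= ?subr0 ?subrK.
  move=> _ [y [hy Ky] <-]; split => //.
  by move: hy; rewrite /esphere /= subr0 addrK.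
apply: connected_continuous_connected Cc _; apply: continuous_subspaceT.
exact: transl_cont.
Qed.

End Key.

Theorem mainTheorem1 (R : realType) (n : nat) (K : set 'rV[R]_n) (O : 'rV[R]_n) :
  closed K -> is_convex K -> affdim_ge2 K -> bnd K O ->
  (LCD K O <= CR K O)%E.
Proof.
move=> Kc Kv Had HO.
have key' := key Kc Kv Had HO.
have mem : forall l : R, (forall r, 0 < r -> r < l -> (r%:E < LCD K O)%E) ->
    (l%:E <= CR K O)%E.
  move=> l hl; apply: ereal_sup_ubound; exists l => //= r r0 rl.
  exact: key' r r0 (hl r r0 rl).
case E: (LCD K O) => [l| |].
- by apply: mem => r r0 rl; rewrite E lte_fin.
- have h : forall e : R, (e%:E <= CR K O)%E.
    by move=> e; apply: mem => r r0 rl; rewrite E ltry.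
  case: (CR K O) h => [c| |] h //.
    have := h (c + 1); rewrite lee_fin => hh; exfalso; move: hh; apply/negP.
    by rewrite -ltNge ltrDl.
  by have := h 0.
- exact: leNye.
Qed.
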